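(* Let $n>p=p_n$ and $r_n=(-\log(1-\frac pn))^{1/2}$. Assume $p/n\to y\in(0,1]$ and that the real sequences $s=s_n$, $t=t_n$ satisfy $s=O(1/r_n)$, $t=O(1/r_n)$ as $n\to\infty$. Then $$\log\frac{\Gamma_p(\frac n2+t)}{\Gamma_p(\frac n2+s)}=p(t-s)(\log n-1-\log2)+r_n^2\Big[(t^2-s^2)-\Big(p-n+\frac12\Big)(t-s)\Big]+o(1)$$ as $n\to\infty$.
   Context: $\Gamma$ is the Gamma function and, for complex $z$ with $\operatorname{Re}(z)>\frac12(p-1)$, the multivariate Gamma function is $\Gamma_p(z)=\pi^{p(p-1)/4}\prod_{i=1}^p\Gamma\big(z-\frac12(i-1)\big)$. *)

(* Defs.v *)
From Stdlib Require Import Reals.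
From Coquelicot Require Import Coquelicot.
Open Scope R_scope.

Definition Gamma (x : R) : R :=
  RInt_gen (fun u => Rpower u (x - 1) * exp (- u))
           (at_right 0) (Rbar_locally p_infty).

Fixpoint prod_Gamma (p : nat) (z : R) : R :=
  match p with
  | O => 1
  | S k => prod_Gamma k z * Gamma (z - INR k / 2)
  end.

Definition mGamma (p : nat) (z : R) : R :=
  Rpower PI (INR p * (INR p - 1) / 4) * prod_Gamma p z.

Definition r_seq (p : nat -> nat) (n : nat) : R :=
  sqrt (- ln (1 - INR (p n) / INR n)).

(* Main.v *)
Require Import Defs.
From Stdlib Require Import Reals.
From Coquelicot Require Import Coquelicot.
From Stdlib Require Import Lra Lia ZArith Classical_Prop.
Open Scope R_scope.

Definition gf (z u : R) : R := Rpower u (z - 1) * exp (- u).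

Lemma gf_pos z u : 0 < u -> 0 < gf z u.
Proof. intros; unfold gf, Rpower. apply Rmult_lt_0_compat; apply exp_pos. Qed.

Lemma gf_cont z u : 0 < u -> continuous (gf z) u.
Proof.
  intros Hu. apply (ex_derive_continuous (K:=R_AbsRing) (V:=R_NormedModule)). unfold gf, Rpower.
  auto_derive. exact Hu.
Qed.

Lemma gf_ex a b z : 0 < a -> 0 < b -> ex_RInt (gf z) a b.
Proof.
  intros Ha Hb. apply (ex_RInt_continuous (V:=R_CompleteNormedModule)). intros w Hw.
  apply gf_cont. assert (0 < Rmin a b) by (apply Rmin_glb_lt; auto). lra.
Qed.

Lemma ln_le_sub1 x : 0 < x -> ln x <= x - 1.
Proof. intros Hx. generalize (exp_ineq1_le (ln x)). rewrite exp_ln; lra. Qed.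

Lemma exp_ln_pred z x : 0 < x -> exp ((z - 1) * ln x) = exp (z * ln x) / x.
Proof.
  intros Hx. replace ((z - 1) * ln x) with (z * ln x + - ln x) by ring.
  rewrite exp_plus, exp_Ropp, exp_ln by exact Hx. reflexivity.
Qed.

Lemma RInt_head z a : 0 < z -> 0 < a <= 1 -> RInt (gf z) a 1 <= 1 / z.
Proof.
  intros Hz [Ha Ha1].
  assert (HI : is_RInt (fun u => exp ((z - 1) * ln u)) a 1
                 (minus (exp (z * ln 1) / z) (exp (z * ln a) / z))).
  { apply (is_RInt_derive (V:=R_CompleteNormedModule)
             (fun u => exp (z * ln u) / z)).
    - intros x Hx. rewrite Rmin_left in Hx by lra. rewrite Rmax_right in Hx by lra.
      auto_derive. lra. rewrite exp_ln_pred by lra. field. split; lra.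
    - intros x Hx. rewrite Rmin_left in Hx by lra. rewrite Rmax_right in Hx by lra.
      apply (ex_derive_continuous (K:=R_AbsRing) (V:=R_NormedModule)).
      auto_derive. lra. }
  apply Rle_trans with (RInt (fun u => exp ((z - 1) * ln u)) a 1).
  - apply RInt_le. lra. apply gf_ex; lra. eexists; exact HI.
    intros x Hx. unfold gf, Rpower.
    rewrite <- (Rmult_1_r (exp ((z-1) * ln x))) at 2.
    apply Rmult_le_compat_l. left; apply exp_pos.
    rewrite <- exp_0. left; apply exp_increasing; lra.
  - rewrite (is_RInt_unique _ _ _ _ HI). unfold minus, plus, opp; simpl.
    rewrite ln_1, Rmult_0_r, exp_0.
    assert (0 < exp (z * ln a) / z) by (apply Rdiv_lt_0_compat; [apply exp_pos|lra]).
    lra.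
Qed.

Lemma exp_le x y : x <= y -> exp x <= exp y.
Proof. intros [H|H]. left; apply exp_increasing; exact H. subst; lra. Qed.

Lemma gf_tail_pt z u : 1 <= u ->
  gf z u <= exp (Rmax (z - 1) 0 * ln (2 * Rmax (z - 1) 0 + 2)) * exp (- u / 2).
Proof.
  intros Hu. set (w := Rmax (z - 1) 0). set (c := 2 * w + 2).
  assert (Hw0 : 0 <= w) by apply Rmax_r.
  assert (Hw1 : z - 1 <= w) by apply Rmax_l.
  assert (Hc : 0 < c) by (unfold c; lra).
  assert (Hlu : 0 <= ln u) by (rewrite <- ln_1; apply ln_le; lra).
  assert (Hl : ln u <= ln c + u / c).
  { replace u with (c * (u / c)) at 1 by (field; lra).
    rewrite ln_mult by (try apply Rdiv_lt_0_compat; lra).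
    generalize (ln_le_sub1 (u / c)). intro H.
    assert (0 < u / c) by (apply Rdiv_lt_0_compat; lra). lra. }
  assert (Hwu : w * (u / c) <= u / 2).
  { unfold Rdiv. rewrite <- Rmult_assoc. apply Rmult_le_reg_r with c. lra.
    rewrite Rmult_assoc, Rinv_l, Rmult_1_r by lra. unfold c.
    assert (0 <= u * w) by (apply Rmult_le_pos; lra). nra. }
  unfold gf, Rpower. rewrite <- !exp_plus. apply exp_le.
  assert ((z - 1) * ln u <= w * ln u) by (apply Rmult_le_compat_r; lra).
  assert (w * ln u <= w * (ln c + u / c)) by (apply Rmult_le_compat_l; lra).
  nra.
Qed.

Lemma RInt_tail z b : 1 <= b ->
  RInt (gf z) 1 b <= 2 * exp (Rmax (z - 1) 0 * ln (2 * Rmax (z - 1) 0 + 2)).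
Proof.
  intros Hb. set (K := exp (Rmax (z - 1) 0 * ln (2 * Rmax (z - 1) 0 + 2))).
  assert (HK : 0 < K) by apply exp_pos.
  assert (HI : is_RInt (fun u => K * exp (- u / 2)) 1 b
                 (minus (- 2 * K * exp (- b / 2)) (- 2 * K * exp (- 1 / 2)))).
  { apply (is_RInt_derive (V:=R_CompleteNormedModule)
             (fun u => - 2 * K * exp (- u / 2))).
    - intros x Hx. auto_derive. auto. set (E := exp _). lra.
    - intros x Hx. apply (ex_derive_continuous (K:=R_AbsRing) (V:=R_NormedModule)).
      auto_derive. auto. }
  apply Rle_trans with (RInt (fun u => K * exp (- u / 2)) 1 b).
  - apply RInt_le. lra. apply gf_ex; lra. eexists; exact HI.
    intros x Hx. apply gf_tail_pt. lra.
  - rewrite (is_RInt_unique _ _ _ _ HI). unfold minus, plus, opp; simpl.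
    assert (exp (- 1 / 2) <= 1) by (rewrite <- exp_0; apply exp_le; lra).
    assert (0 < exp (- b / 2)) by apply exp_pos. nra.
Qed.

Lemma RInt_gf_mono z a b a' b' : 0 < a' -> a' <= a -> a <= b -> b <= b' ->
  RInt (gf z) a b <= RInt (gf z) a' b'.
Proof.
  intros H1 H2 H3 H4.
  rewrite <- (RInt_Chasles (V:=R_CompleteNormedModule) (gf z) a' a b')
    by (apply gf_ex; lra).
  rewrite <- (RInt_Chasles (V:=R_CompleteNormedModule) (gf z) a b b')
    by (apply gf_ex; lra).
  unfold plus; simpl.
  assert (0 <= RInt (gf z) a' a).
  { apply RInt_ge_0. lra. apply gf_ex; lra. intros; left; apply gf_pos; lra. }
  assert (0 <= RInt (gf z) b b').
  { apply RInt_ge_0. lra. apply gf_ex; lra. intros; left; apply gf_pos; lra. }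
  lra.
Qed.

Lemma RInt_gf_bound z : 0 < z -> exists M, forall a b, 0 < a -> a <= b ->
  RInt (gf z) a b <= M.
Proof.
  intros Hz.
  exists (1 / z + 2 * exp (Rmax (z - 1) 0 * ln (2 * Rmax (z - 1) 0 + 2))).
  intros a b Ha Hab.
  assert (H0 : 0 < Rmin a 1) by (apply Rmin_glb_lt; lra).
  apply Rle_trans with (RInt (gf z) (Rmin a 1) (Rmax b 1)).
  - apply RInt_gf_mono; auto. apply Rmin_l. apply Rmax_l.
  - assert (1 <= Rmax b 1) by apply Rmax_r.
    rewrite <- (RInt_Chasles (V:=R_CompleteNormedModule) (gf z) (Rmin a 1) 1 (Rmax b 1))
      by (apply gf_ex; lra).
    unfold plus; simpl.
    assert (RInt (gf z) (Rmin a 1) 1 <= 1 / z).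
    { apply RInt_head; auto. split; auto. apply Rmin_r. }
    assert (RInt (gf z) 1 (Rmax b 1) <= 2 * exp (Rmax (z - 1) 0 * ln (2 * Rmax (z - 1) 0 + 2))).
    { apply RInt_tail. apply Rmax_r. }
    lra.
Qed.

Lemma gamma_sup z : 0 < z -> exists l,
  (forall a b, 0 < a -> a <= b -> RInt (gf z) a b <= l) /\
  (forall eps, 0 < eps -> exists a0 b0, 0 < a0 /\ a0 <= b0 /\
     forall a b, 0 < a -> a <= a0 -> b0 <= b -> l - eps < RInt (gf z) a b).
Proof.
  intros Hz. destruct (RInt_gf_bound z Hz) as [M HM].
  set (E := fun v => exists a b, 0 < a /\ a <= b /\ v = RInt (gf z) a b).
  assert (HB : bound E).
  { exists M. intros v [a [b [Ha [Hab ->]]]]. apply HM; auto. }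
  assert (HE : exists v, E v).
  { exists (RInt (gf z) 1 1). exists 1, 1. repeat split; lra. }
  destruct (completeness E HB HE) as [l [Hub Hlub]].
  exists l. split.
  - intros a b Ha Hab. apply Hub. exists a, b. auto.
  - intros eps Heps.
    destruct (Rlt_or_le (l - eps) l) as [_|?]; [|lra].
    assert (exists v, E v /\ l - eps < v) as [v [[a0 [b0 [Ha0 [Hab0 ->]]]] Hv]].
    { apply Classical_Prop.NNPP. intro Hn.
      assert (l <= l - eps); [|lra].
      apply Hlub. intros v Hv. apply Rnot_lt_le. intro Hlt. apply Hn.
      exists v; auto. }
    exists a0, b0. repeat split; auto.
    intros a b Ha Ha' Hb. eapply Rlt_le_trans. exact Hv.
    apply RInt_gf_mono; lra.
Qed.

Lemma Gamma_char z : 0 < z ->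
  (forall a b, 0 < a -> a <= b -> RInt (gf z) a b <= Gamma z) /\
  (forall eps, 0 < eps -> exists a0 b0, 0 < a0 /\ a0 <= b0 /\
     forall a b, 0 < a -> a <= a0 -> b0 <= b -> Gamma z - eps < RInt (gf z) a b).
Proof.
  intros Hz. destruct (gamma_sup z Hz) as [l [H1 H2]].
  assert (Hg : is_RInt_gen (gf z) (at_right 0) (Rbar_locally p_infty) l).
  { unfold is_RInt_gen, filterlimi, filter_le, filtermapi.
    intros P [eps HP].
    destruct (H2 eps (cond_pos eps)) as [a0 [b0 [Ha0 [Hab0 H3]]]].
    apply Filter_prod with (Q := fun a => 0 < a <= a0) (R := fun b => b0 < b).
    - unfold at_right, within, locally. exists (mkposreal a0 Ha0).
      intros y Hy Hpos. change (Rabs (y - 0) < a0) in Hy.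
      unfold Rabs in Hy; destruct Rcase_abs in Hy; simpl in Hy; lra.
    - exists b0. auto.
    - intros a b [Ha Ha'] Hb. simpl. exists (RInt (gf z) a b). split.
      + apply (RInt_correct (V:=R_CompleteNormedModule)). apply gf_ex; lra.
      + apply HP. change (Rabs (RInt (gf z) a b - l) < eps).
        assert (l - eps < RInt (gf z) a b) by (apply H3; lra).
        assert (RInt (gf z) a b <= l) by (apply H1; lra).
        unfold Rabs; destruct Rcase_abs; lra. }
  assert (HG : Gamma z = l).
  { unfold Gamma. apply (is_RInt_gen_unique (V:=R_CompleteNormedModule)).
    exact Hg. }
  rewrite HG. split; auto.
Qed.

Lemma Gamma_pos z : 0 < z -> 0 < Gamma z.
Proof.
  intros Hz. destruct (Gamma_char z Hz) as [H1 _].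
  apply Rlt_le_trans with (RInt (gf z) 1 2); [|apply H1; lra].
  replace 0 with (RInt (fun _ => 0) 1 2).
  - apply RInt_lt. lra.
    + intros; apply gf_cont; lra.
    + intros; apply continuous_const.
    + intros; apply gf_pos; lra.
  - rewrite (RInt_const (V:=R_CompleteNormedModule)). unfold scal; simpl.
    unfold mult; simpl. ring.
Qed.

Lemma gf_parts z a b : 0 < a -> 0 < b ->
  RInt (gf (z + 1)) a b =
  exp (z * ln a) * exp (- a) - exp (z * ln b) * exp (- b) + z * RInt (gf z) a b.
Proof.
  intros Ha Hb.
  assert (HI : is_RInt (fun u => gf (z + 1) u - z * gf z u) a b
     (minus (- (exp (z * ln b) * exp (- b))) (- (exp (z * ln a) * exp (- a))))).
  { assert (Hm : 0 < Rmin a b) by (apply Rmin_glb_lt; lra).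
    apply (is_RInt_derive (V:=R_CompleteNormedModule)
             (fun u => - (exp (z * ln u) * exp (- u)))).
    - intros x Hx. auto_derive. lra. unfold gf, Rpower.
      replace (z + 1 - 1) with z by ring. rewrite (exp_ln_pred z x) by lra.
      field. lra.
    - intros x Hx. apply (continuous_minus (V:=R_NormedModule)).
      apply gf_cont; lra.
      apply (continuous_scal_r (K:=R_AbsRing) (V:=R_NormedModule) z (gf z)).
      apply gf_cont; lra. }
  assert (HJ : is_RInt (fun u => gf (z + 1) u - z * gf z u) a b
     (minus (RInt (gf (z+1)) a b) (scal z (RInt (gf z) a b)))).
  { apply (is_RInt_minus (V:=R_NormedModule)).
    apply (RInt_correct (V:=R_CompleteNormedModule)); apply gf_ex; lra.
    apply (is_RInt_scal (V:=R_NormedModule)).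
    apply (RInt_correct (V:=R_CompleteNormedModule)); apply gf_ex; lra. }
  apply (is_RInt_unique (V:=R_CompleteNormedModule)) in HI. apply (is_RInt_unique (V:=R_CompleteNormedModule)) in HJ.
  rewrite HI in HJ. unfold minus, plus, opp, scal in HJ; simpl in HJ.
  unfold mult in HJ; simpl in HJ. lra.
Qed.

Lemma zero_of_small x c : 0 <= c -> (forall eps, 0 < eps -> Rabs x <= c * eps) -> x = 0.
Proof.
  intros Hc H. destruct (Req_dec x 0) as [|Hx]; auto.
  assert (Ha : 0 < Rabs x) by (apply Rabs_pos_lt; auto).
  assert (Hc1 : 0 < c + 1) by lra.
  specialize (H (Rabs x / (2 * (c + 1)))).
  assert (0 < Rabs x / (2 * (c + 1))) by (apply Rdiv_lt_0_compat; lra).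
  specialize (H H0).
  assert (c * (Rabs x / (2 * (c + 1))) < Rabs x); [|lra].
  apply Rmult_lt_reg_r with (2 * (c + 1)). lra.
  field_simplify; try lra. nra.
Qed.

Lemma Gamma_succ z : 0 < z -> Gamma (z + 1) = z * Gamma z.
Proof.
  intros Hz.
  assert (Hz1 : 0 < z + 1) by lra.
  destruct (Gamma_char z Hz) as [U0 L0].
  destruct (Gamma_char (z + 1) Hz1) as [U1 L1].
  apply Rminus_diag_uniq. apply (zero_of_small _ (3 + z)); [lra|].
  intros eps Heps.
  destruct (L0 eps Heps) as [a0 [b0 [Ha0 [Hab0 H0]]]].
  destruct (L1 eps Heps) as [a1 [b1 [Ha1 [Hab1 H1]]]].
  set (K := exp (Rmax (z + 1 - 1) 0 * ln (2 * Rmax (z + 1 - 1) 0 + 2))).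
  assert (HK : 0 < K) by apply exp_pos.
  set (a := Rmin (Rmin a0 a1) (exp (ln eps / z))).
  set (b := Rmax (Rmax (Rmax b0 b1) 1) (- 2 * ln (eps / K))).
  assert (Ha : 0 < a).
  { unfold a. apply Rmin_glb_lt. apply Rmin_glb_lt; lra. apply exp_pos. }
  assert (Haa0 : a <= a0) by (unfold a; eapply Rle_trans; [apply Rmin_l|apply Rmin_l]).
  assert (Haa1 : a <= a1) by (unfold a; eapply Rle_trans; [apply Rmin_l|apply Rmin_r]).
  assert (Ha2 : a <= exp (ln eps / z)) by (unfold a; apply Rmin_r).
  assert (Hbb : Rmax (Rmax b0 b1) 1 <= b) by (unfold b; apply Rmax_l).
  assert (Hbb0 : b0 <= b).
  { eapply Rle_trans; [|exact Hbb]. eapply Rle_trans; [|apply Rmax_l]. apply Rmax_l. }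
  assert (Hbb1 : b1 <= b).
  { eapply Rle_trans; [|exact Hbb]. eapply Rle_trans; [|apply Rmax_l]. apply Rmax_r. }
  assert (Hb1 : 1 <= b) by (eapply Rle_trans; [|exact Hbb]; apply Rmax_r).
  assert (Hb2 : - 2 * ln (eps / K) <= b) by (unfold b; apply Rmax_r).
  assert (Hab : a <= b) by lra.
  assert (Bb : 0 <= exp (z * ln b) * exp (- b) <= eps).
  { split. left; apply Rmult_lt_0_compat; apply exp_pos.
    generalize (gf_tail_pt (z + 1) b Hb1). fold K. unfold gf, Rpower.
    replace (z + 1 - 1) with z by ring. intro Ht. eapply Rle_trans. exact Ht.
    replace eps with (K * exp (ln (eps / K))).
    apply Rmult_le_compat_l. lra. apply exp_le. lra.
    rewrite exp_ln. field. lra. apply Rdiv_lt_0_compat; lra. }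
  assert (Ba : 0 <= exp (z * ln a) * exp (- a) <= eps).
  { split. left; apply Rmult_lt_0_compat; apply exp_pos.
    assert (exp (- a) <= 1) by (rewrite <- exp_0; apply exp_le; lra).
    assert (exp (z * ln a) <= eps).
    { replace eps with (exp (z * (ln eps / z))).
      apply exp_le. apply Rmult_le_compat_l. lra.
      rewrite <- (ln_exp (ln eps / z)). apply ln_le; auto.
      replace (z * (ln eps / z)) with (ln eps) by (field; lra). apply exp_ln; auto. }
    assert (0 < exp (z * ln a)) by apply exp_pos. nra. }
  assert (E1 := U1 a b Ha Hab). assert (E2 := H1 a b Ha Haa1 Hbb1).
  assert (E3 := U0 a b Ha Hab). assert (E4 := H0 a b Ha Haa0 Hbb0).
  rewrite (gf_parts z a b) in E1, E2 by lra.
  assert (z * (Gamma z - eps) <= z * RInt (gf z) a b) by (apply Rmult_le_compat_l; lra).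
  assert (z * RInt (gf z) a b <= z * Gamma z) by (apply Rmult_le_compat_l; lra).
  unfold Rabs; destruct Rcase_abs; nra.
Qed.

Lemma exp_convex l p q : 0 <= l <= 1 ->
  exp (l * p + (1 - l) * q) <= l * exp p + (1 - l) * exp q.
Proof.
  intros Hl. set (m := l * p + (1 - l) * q).
  assert (H1 : exp m * (1 + (p - m)) <= exp p).
  { replace (exp p) with (exp m * exp (p - m)) by (rewrite <- exp_plus; f_equal; ring).
    apply Rmult_le_compat_l. left; apply exp_pos. apply exp_ineq1_le. }
  assert (H2 : exp m * (1 + (q - m)) <= exp q).
  { replace (exp q) with (exp m * exp (q - m)) by (rewrite <- exp_plus; f_equal; ring).
    apply Rmult_le_compat_l. left; apply exp_pos. apply exp_ineq1_le. }
  assert (l * (exp m * (1 + (p - m))) <= l * exp p) by (apply Rmult_le_compat_l; lra).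
  assert ((1 - l) * (exp m * (1 + (q - m))) <= (1 - l) * exp q) by (apply Rmult_le_compat_l; lra).
  assert (Heq : l * (exp m * (1 + (p - m))) + (1 - l) * (exp m * (1 + (q - m))) = exp m)
    by (unfold m; ring).
  lra.
Qed.

Lemma gf_exp z u : 0 < u -> gf z u = exp ((z - 1) * ln u - u).
Proof. intros; unfold gf, Rpower. rewrite <- exp_plus. f_equal; ring. Qed.

Lemma holder_fin x y l a b : 0 < x -> 0 < y -> 0 <= l <= 1 -> 0 < a < b ->
  RInt (gf (l * x + (1 - l) * y)) a b <=
  exp (l * ln (RInt (gf x) a b) + (1 - l) * ln (RInt (gf y) a b)).
Proof.
  intros Hx Hy Hl [Ha Hab].
  set (A := RInt (gf x) a b). set (B := RInt (gf y) a b).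
  set (G := exp (l * ln A + (1 - l) * ln B)).
  assert (HA : 0 < A).
  { unfold A. replace 0 with (RInt (fun _ => 0) a b).
    apply RInt_lt; auto. intros; apply gf_cont; lra. intros; apply continuous_const.
    intros; apply gf_pos; lra.
    rewrite (RInt_const (V:=R_CompleteNormedModule)). unfold scal; simpl; unfold mult; simpl; ring. }
  assert (HB : 0 < B).
  { unfold B. replace 0 with (RInt (fun _ => 0) a b).
    apply RInt_lt; auto. intros; apply gf_cont; lra. intros; apply continuous_const.
    intros; apply gf_pos; lra.
    rewrite (RInt_const (V:=R_CompleteNormedModule)). unfold scal; simpl; unfold mult; simpl; ring. }
  assert (HI : is_RInt (fun u => plus (scal (G * l / A) (gf x u)) (scal (G * (1 - l) / B) (gf y u))) a b
                 (plus (scal (G * l / A) A) (scal (G * (1 - l) / B) B))).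
  { apply (is_RInt_plus (V:=R_NormedModule)); apply (is_RInt_scal (V:=R_NormedModule));
    apply (RInt_correct (V:=R_CompleteNormedModule)); apply gf_ex; lra. }
  apply Rle_trans with (RInt (fun u => plus (scal (G * l / A) (gf x u)) (scal (G * (1 - l) / B) (gf y u))) a b).
  - apply RInt_le. lra. apply gf_ex; lra. eexists; exact HI.
    intros u Hu. unfold plus, scal; simpl; unfold mult; simpl.
    rewrite !gf_exp by lra.
    replace ((l * x + (1 - l) * y - 1) * ln u - u) with
      (l * ((x - 1) * ln u - u) + (1 - l) * ((y - 1) * ln u - u)) by ring.
    set (X := (x - 1) * ln u - u). set (Y := (y - 1) * ln u - u).
    generalize (exp_convex l (X - ln A) (Y - ln B) Hl). intro Hc.
    replace (l * X + (1 - l) * Y) with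
      ((l * ln A + (1 - l) * ln B) + (l * (X - ln A) + (1 - l) * (Y - ln B))) by ring.
    rewrite exp_plus. fold G.
    assert (HG : 0 < G) by apply exp_pos.
    apply Rle_trans with (G * (l * exp (X - ln A) + (1 - l) * exp (Y - ln B))).
    apply Rmult_le_compat_l; lra.
    unfold Rminus. rewrite !exp_plus, !exp_Ropp, !exp_ln by lra. right; field; lra.
  - rewrite (is_RInt_unique (V:=R_CompleteNormedModule) _ _ _ _ HI).
    unfold plus, scal; simpl; unfold mult; simpl. right; field; lra.
Qed.

Lemma RInt_gf_pos z a b : 0 < a < b -> 0 < RInt (gf z) a b.
Proof.
  intros [Ha Hab]. replace 0 with (RInt (fun _ => 0) a b).
  apply RInt_lt; auto. intros; apply gf_cont; lra. intros; apply continuous_const.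
  intros; apply gf_pos; lra.
  rewrite (RInt_const (V:=R_CompleteNormedModule)). unfold scal; simpl; unfold mult; simpl; ring.
Qed.

Lemma le_of_small x y : (forall eps, 0 < eps -> x <= y + eps) -> x <= y.
Proof.
  intros H. apply Rnot_lt_le. intro Hlt.
  specialize (H ((x - y) / 2)). assert (0 < (x - y) / 2) by lra.
  specialize (H H0). lra.
Qed.

Lemma lnGamma_convex x y l : 0 < x -> 0 < y -> 0 <= l <= 1 ->
  ln (Gamma (l * x + (1 - l) * y)) <= l * ln (Gamma x) + (1 - l) * ln (Gamma y).
Proof.
  intros Hx Hy Hl.
  assert (Hw : 0 < l * x + (1 - l) * y).
  { destruct (Req_dec l 0). subst; lra. assert (0 < l) by lra.
    assert (0 < l * x) by (apply Rmult_lt_0_compat; lra).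
    assert (0 <= (1 - l) * y) by (apply Rmult_le_pos; lra). lra. }
  rewrite <- (ln_exp (l * ln (Gamma x) + (1 - l) * ln (Gamma y))).
  apply ln_le. apply Gamma_pos; auto.
  apply le_of_small. intros eps Heps.
  destruct (proj2 (Gamma_char _ Hw) eps Heps) as [a0 [b0 [Ha0 [Hab0 H]]]].
  specialize (H a0 (b0 + 1) Ha0 (Rle_refl _) ltac:(lra)).
  assert (Hh := holder_fin x y l a0 (b0 + 1) Hx Hy Hl ltac:(lra)).
  assert (HIx := RInt_gf_pos x a0 (b0 + 1) ltac:(lra)).
  assert (HIy := RInt_gf_pos y a0 (b0 + 1) ltac:(lra)).
  assert (Ux := proj1 (Gamma_char x Hx) a0 (b0 + 1) Ha0 ltac:(lra)).
  assert (Uy := proj1 (Gamma_char y Hy) a0 (b0 + 1) Ha0 ltac:(lra)).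
  assert (exp (l * ln (RInt (gf x) a0 (b0 + 1)) + (1 - l) * ln (RInt (gf y) a0 (b0 + 1)))
          <= exp (l * ln (Gamma x) + (1 - l) * ln (Gamma y))).
  { apply exp_le. apply Rplus_le_compat; apply Rmult_le_compat_l; try lra;
    apply ln_le; auto. }
  lra.
Qed.

Lemma ln_taylor u : -1/2 <= u <= 1 -> Rabs (ln (1 + u) - u + u ^ 2 / 2) <= 2 * Rabs u ^ 3.
Proof.
  intros Hu.
  set (h := fun v => ln (1 + v) - v + v ^ 2 / 2).
  assert (Hd : forall c, Rmin 0 u <= c <= Rmax 0 u ->
                 derivable_pt_lim h c (c ^ 2 / (1 + c))).
  { intros c Hc. apply is_derive_Reals. unfold h.
    assert (-1/2 <= c).
    { destruct (Rle_dec 0 u). rewrite Rmin_left in Hc; lra. rewrite Rmin_right in Hc; lra. }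
    auto_derive. lra. field. lra. }
  destruct (MVT_abs h _ 0 u Hd) as [c [Hc Hrange]].
  assert (Hc' : -1/2 <= c /\ Rabs c <= Rabs u).
  { destruct (Rle_dec 0 u).
    rewrite Rmin_left, Rmax_right in Hrange by lra.
    rewrite !Rabs_right by lra. lra.
    rewrite Rmin_right, Rmax_left in Hrange by lra.
    rewrite !Rabs_left1 by lra. lra. }
  unfold h in Hc. rewrite Rplus_0_r, ln_1 in Hc.
  replace (0 - 0 + 0 ^ 2 / 2) with 0 in Hc by (simpl; field).
  rewrite !Rminus_0_r in Hc. rewrite Hc.
  assert (Hq : Rabs (c ^ 2 / (1 + c)) <= 2 * Rabs u ^ 2).
  { rewrite Rabs_div by lra. rewrite (Rabs_right (1 + c)) by lra.
    rewrite <- RPow_abs. apply Rle_trans with (Rabs c ^ 2 / (1/2)).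
    apply Rmult_le_compat_l. apply pow_le, Rabs_pos.
    apply Rinv_le_contravar; lra.
    assert (Rabs c ^ 2 <= Rabs u ^ 2) by (apply pow_incr; split; [apply Rabs_pos|lra]).
    lra. }
  assert (0 <= Rabs u) by apply Rabs_pos.
  replace (2 * Rabs u ^ 3) with (2 * Rabs u ^ 2 * Rabs u) by ring.
  apply Rmult_le_compat_r; auto.
Qed.

Definition L (z : R) := ln (Gamma z).

Lemma L_succ z : 0 < z -> L (z + 1) = L z + ln z.
Proof.
  intros Hz. unfold L. rewrite Gamma_succ by auto.
  rewrite ln_mult; [ring | auto | apply Gamma_pos; auto].
Qed.

Lemma L_slope a b c : 0 < a -> a < b -> b < c ->
  (c - a) * L b <= (c - b) * L a + (b - a) * L c.
Proof.
  intros Ha Hab Hbc.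
  set (l := (c - b) / (c - a)).
  assert (Hl : 0 <= l <= 1).
  { unfold l. split. apply Rdiv_le_0_compat; lra.
    apply Rmult_le_reg_r with (c - a). lra. field_simplify; lra. }
  assert (Hb : l * a + (1 - l) * c = b) by (unfold l; field; lra).
  generalize (lnGamma_convex a c l Ha ltac:(lra) Hl). rewrite Hb. fold (L b) (L a) (L c).
  intro H. apply Rmult_le_compat_l with (r := c - a) in H; [|lra].
  replace ((c - a) * (l * L a + (1 - l) * L c)) with ((c - b) * L a + (b - a) * L c) in H
    by (unfold l; field; lra). exact H.
Qed.

Lemma ln_diff_le a b : 0 < a -> a <= b -> ln b - ln a <= (b - a) / a.
Proof.
  intros Ha Hab. assert (0 < b / a) by (apply Rdiv_lt_0_compat; lra).
  replace (ln b - ln a) with (ln (b / a)).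
  generalize (ln_le_sub1 (b / a) H). intro. replace ((b - a) / a) with (b / a - 1) by (field; lra). lra.
  unfold Rdiv. rewrite ln_mult, ln_Rinv by (try apply Rinv_0_lt_compat; lra). ring.
Qed.

Lemma ln_diff_ge0 a b : 0 < a -> a <= b -> 0 <= ln b - ln a.
Proof. intros. assert (ln a <= ln b) by (apply ln_le; lra). lra. Qed.

Lemma L_bracket y t : Rabs t + 1 < y ->
  Rabs (L (y + t) - L y - t * ln y) <= Rabs t * (Rabs t + 1) / (y - Rabs t - 1).
Proof.
  intros Hy.
  assert (Hd : 0 < y - Rabs t - 1) by lra.
  assert (HR : 0 <= Rabs t * (Rabs t + 1) / (y - Rabs t - 1)).
  { apply Rdiv_le_0_compat; [|lra]. apply Rmult_le_pos. apply Rabs_pos.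
    generalize (Rabs_pos t); lra. }
  destruct (Rtotal_order t 0) as [Hn|[Hz|Hp]].
  -
    rewrite Rabs_left in * by lra. set (v := - t) in *. assert (Hv : v = - t) by reflexivity. clearbody v.
    assert (H1 := L_slope (y + t - 1) (y + t) y ltac:(lra) ltac:(lra) ltac:(lra)).
    assert (H2 := L_slope (y + t) y (y + 1) ltac:(lra) ltac:(lra) ltac:(lra)).
    assert (E1 : L (y + t) = L (y + t - 1) + ln (y + t - 1)).
    { replace (y + t) with (y + t - 1 + 1) at 1 by ring. apply L_succ; lra. }
    assert (E2 := L_succ y ltac:(lra)).
    rewrite E1 in H1, H2 |- *. rewrite E2 in H2.
    assert (Hl := ln_diff_le (y + t - 1) y ltac:(lra) ltac:(lra)).
    assert (Hl0 := ln_diff_ge0 (y + t - 1) y ltac:(lra) ltac:(lra)).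
    assert (Hq : (y - (y + t - 1)) / (y + t - 1) <= (v + 1) / (y - v - 1)).
    { subst v. replace (y - (y + t - 1)) with (- t + 1) by ring.
      replace (y - - t - 1) with (y + t - 1) by ring. lra. }
    assert (Hfin : t * ln y <= L (y + t - 1) + ln (y + t - 1) - L y <= t * ln (y + t - 1)).
    { split; nra. }
    assert (Hm : v * (ln y - ln (y + t - 1)) <= v * ((v + 1) / (y - v - 1)))
      by (apply Rmult_le_compat_l; lra).
    subst v. assert (Ee : t * ln (y + t - 1) - t * ln y = - t * (ln y - ln (y + t - 1))) by ring.
    rewrite (Rabs_left t) by lra.
    replace (- t * (- t + 1) / (y - - t - 1)) with (- t * ((- t + 1) / (y - - t - 1))) by (field; lra).
    unfold Rabs; destruct Rcase_abs; lra.
  - subst. rewrite Rplus_0_r. replace (L y - L y - 0 * ln y) with 0 by ring.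
    rewrite Rabs_R0. rewrite Rabs_R0 in HR. exact HR.
  - rewrite Rabs_right in * by lra.
    assert (H1 := L_slope (y - 1) y (y + t) ltac:(lra) ltac:(lra) ltac:(lra)).
    assert (H2 := L_slope y (y + t) (y + t + 1) ltac:(lra) ltac:(lra) ltac:(lra)).
    assert (E1 : L y = L (y - 1) + ln (y - 1)).
    { replace y with (y - 1 + 1) at 1 by ring. apply L_succ; lra. }
    assert (E2 := L_succ (y + t) ltac:(lra)).
    rewrite E2 in H2.
    assert (Hl := ln_diff_le y (y + t) ltac:(lra) ltac:(lra)).
    assert (Hl' := ln_diff_le (y - 1) y ltac:(lra) ltac:(lra)).
    assert (Hl0 := ln_diff_ge0 y (y + t) ltac:(lra) ltac:(lra)).
    assert (Hl0' := ln_diff_ge0 (y - 1) y ltac:(lra) ltac:(lra)).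
    assert (Hfin : t * ln (y - 1) <= L (y + t) - L y <= t * ln (y + t)).
    { split; nra. }
    assert (Hq1 : (y + t - y) / y <= (t + 1) / (y - t - 1)).
    { apply Rle_trans with ((t + 1) / y).
      apply Rmult_le_compat_r. left; apply Rinv_0_lt_compat; lra. lra.
      apply Rmult_le_compat_l. lra. apply Rinv_le_contravar; lra. }
    assert (Hq2 : (y - (y - 1)) / (y - 1) <= (t + 1) / (y - t - 1)).
    { apply Rle_trans with ((t + 1) / (y - 1)).
      apply Rmult_le_compat_r. left; apply Rinv_0_lt_compat; lra. lra.
      apply Rmult_le_compat_l. lra. apply Rinv_le_contravar; lra. }
    assert (Hm1 : t * (ln (y + t) - ln y) <= t * ((t + 1) / (y - t - 1)))
      by (apply Rmult_le_compat_l; lra).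
    assert (Hm2 : t * (ln y - ln (y - 1)) <= t * ((t + 1) / (y - t - 1)))
      by (apply Rmult_le_compat_l; lra).
    replace (t * (t + 1) / (y - t - 1)) with (t * ((t + 1) / (y - t - 1))) by (field; lra).
    assert (Ee1 : t * ln (y + t) - t * ln y = t * (ln (y + t) - ln y)) by ring.
    assert (Ee2 : t * ln y - t * ln (y - 1) = t * (ln y - ln (y - 1))) by ring.
    rewrite (Rabs_right t) by lra. replace (t * (t + 1) / (y - t - 1)) with (t * ((t + 1) / (y - t - 1))) by (field; lra).
    unfold Rabs; destruct Rcase_abs; lra.
Qed.

Fixpoint sumn (f : nat -> R) (N : nat) : R :=
  match N with O => 0 | S k => sumn f k + f k end.

Lemma sumn_le (a b : nat -> R) N : (forall k, (k < N)%nat -> a k <= b k) ->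
  sumn a N <= sumn b N.
Proof.
  induction N; simpl; intros H. lra.
  assert (a N <= b N) by (apply H; lia).
  assert (sumn a N <= sumn b N) by (apply IHN; intros; apply H; lia). lra.
Qed.

Lemma sumn_abs_le (a b c : nat -> R) N : (forall k, (k < N)%nat -> Rabs (a k - b k) <= c k) ->
  Rabs (sumn a N - sumn b N) <= sumn c N.
Proof.
  induction N; simpl; intros H. rewrite Rminus_0_r, Rabs_R0; lra.
  assert (H1 : Rabs (a N - b N) <= c N) by (apply H; lia).
  assert (H2 : Rabs (sumn a N - sumn b N) <= sumn c N) by (apply IHN; intros; apply H; lia).
  replace (sumn a N + a N - (sumn b N + b N)) with ((sumn a N - sumn b N) + (a N - b N)) by ring.
  eapply Rle_trans. apply Rabs_triang. lra.
Qed.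

Lemma sumn_tele (f : nat -> R) N : sumn (fun k => f k - f (S k)) N = f O - f N.
Proof. induction N; simpl. ring. rewrite IHN. ring. Qed.

Lemma sumn_ext (a b : nat -> R) N : (forall k, a k = b k) -> sumn a N = sumn b N.
Proof. intros H; induction N; simpl; auto. rewrite IHN, H; auto. Qed.

Lemma sumn_scal c (a : nat -> R) N : sumn (fun k => c * a k) N = c * sumn a N.
Proof. induction N; simpl. ring. rewrite IHN. ring. Qed.

Lemma sumn_plus (a b : nat -> R) N : sumn (fun k => a k + b k) N = sumn a N + sumn b N.
Proof. induction N; simpl. ring. rewrite IHN. ring. Qed.

Lemma sumn_nonneg (a : nat -> R) N : (forall k, 0 <= a k) -> 0 <= sumn a N.
Proof. intros H; induction N; simpl. lra. specialize (H N). lra. Qed.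

Definition gterm (x t : R) (k : nat) : R :=
  let y := x + INR k in t * (ln (y + 1) - ln y) - (ln (y + t) - ln y).

Lemma shift_identity x t N : 0 < x -> 0 < x + t ->
  L (x + t) - L x - t * ln x =
  L (x + INR N + t) - L (x + INR N) - t * ln (x + INR N) + sumn (gterm x t) N.
Proof.
  intros Hx Hxt. induction N.
  - simpl sumn. change (INR 0) with 0. rewrite !Rplus_0_r. ring.
  - rewrite IHN. simpl sumn. rewrite S_INR.
    assert (HN := pos_INR N).
    replace (x + (INR N + 1) + t) with (x + INR N + t + 1) by ring.
    replace (x + (INR N + 1)) with (x + INR N + 1) by ring.
    rewrite (L_succ (x + INR N + t)) by lra. rewrite (L_succ (x + INR N)) by lra.
    unfold gterm. replace (x + INR N + t) with (x + INR N + t) by ring.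
    replace (x + INR N + t) with ((x + INR N) + t) by ring. ring.
Qed.

Lemma ln_ratio y d : 0 < y -> 0 < y + d -> ln (y + d) - ln y = ln (1 + d / y).
Proof.
  intros Hy Hyd. replace (y + d) with (y * (1 + d / y)) by (field; lra).
  rewrite ln_mult. ring. auto.
  replace (1 + d / y) with ((y + d) / y) by (field; lra). apply Rdiv_lt_0_compat; lra.
Qed.

Lemma Rabs_sub_le a b : Rabs (a - b) <= Rabs a + Rabs b.
Proof. unfold Rminus. eapply Rle_trans. apply Rabs_triang. rewrite Rabs_Ropp. lra. Qed.

Lemma gterm_bound x t B k : 1 <= x -> Rabs t <= B -> Rabs t <= x / 2 ->
  Rabs (gterm x t k - (t ^ 2 - t) / (2 * (x + INR k) ^ 2))
   <= 2 * (1 + B ^ 2) * Rabs t / (x + INR k) ^ 3.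
Proof.
  intros Hx HtB Htx. unfold gterm. set (y := x + INR k).
  assert (Hy : x <= y) by (unfold y; generalize (pos_INR k); lra).
  assert (Hy0 : 0 < y) by lra.
  assert (Hat : Rabs (t / y) <= 1 / 2).
  { rewrite Rabs_div by lra. rewrite (Rabs_right y) by lra.
    apply Rmult_le_reg_r with y. lra. unfold Rdiv. rewrite Rmult_assoc, Rinv_l, Rmult_1_r by lra.
    lra. }
  assert (Hty : 0 < y + t).
  { generalize (Rabs_pos t). intro. unfold Rabs in Htx; destruct Rcase_abs in Htx; lra. }
  rewrite ln_ratio by lra. rewrite (ln_ratio y t) by lra.
  assert (H1 := ln_taylor (1 / y)).
  assert (H2 := ln_taylor (t / y)).
  assert (Hiy : 0 < 1 / y <= 1).
  { split. apply Rdiv_lt_0_compat; lra. apply Rmult_le_reg_r with y. lra.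
    field_simplify; lra. }
  specialize (H1 ltac:(lra)).
  specialize (H2 ltac:(apply Rabs_le_between in Hat; lra)).
  rewrite (Rabs_right (1 / y)) in H1 by lra.
  replace (t * ln (1 + 1 / y) - ln (1 + t / y) - (t ^ 2 - t) / (2 * y ^ 2)) with
    (t * (ln (1 + 1 / y) - 1 / y + (1 / y) ^ 2 / 2) - (ln (1 + t / y) - t / y + (t / y) ^ 2 / 2))
    by (field; lra).
  eapply Rle_trans. apply Rabs_sub_le.
  rewrite Rabs_mult.
  assert (E1 : Rabs t * Rabs (ln (1 + 1 / y) - 1 / y + (1 / y) ^ 2 / 2) <= 2 * Rabs t / y ^ 3).
  { replace (2 * Rabs t / y ^ 3) with (Rabs t * (2 * (1 / y) ^ 3)) by (field; lra).
    apply Rmult_le_compat_l; auto. apply Rabs_pos. }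
  assert (E2 : 2 * Rabs (t / y) ^ 3 <= 2 * B ^ 2 * Rabs t / y ^ 3).
  { rewrite Rabs_div, (Rabs_right y) by lra.
    replace (2 * (Rabs t / y) ^ 3) with (2 * Rabs t ^ 2 * Rabs t / y ^ 3) by (field; lra).
    unfold Rdiv. apply Rmult_le_compat_r. left; apply Rinv_0_lt_compat, pow_lt; lra.
    apply Rmult_le_compat_r. apply Rabs_pos. apply Rmult_le_compat_l. lra.
    apply pow_incr. split; [apply Rabs_pos|auto]. }
  replace (2 * (1 + B ^ 2) * Rabs t / y ^ 3) with (2 * Rabs t / y ^ 3 + 2 * B ^ 2 * Rabs t / y ^ 3)
    by (field; lra).
  lra.
Qed.

Lemma S3_term y : 1 <= y ->
  1 / y ^ 3 <= 1 / (2 * (y - 1/2) ^ 2) - 1 / (2 * (y + 1 - 1/2) ^ 2).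
Proof.
  intros Hy.
  assert (E : 1 / (2 * (y - 1/2) ^ 2) - 1 / (2 * (y + 1 - 1/2) ^ 2) - 1 / y ^ 3
            = (y ^ 4 - (y ^ 2 - 1/4) ^ 2) / (y ^ 3 * (y ^ 2 - 1/4) ^ 2)).
  { field. repeat split; try nra. }
  assert (0 <= (y ^ 4 - (y ^ 2 - 1/4) ^ 2) / (y ^ 3 * (y ^ 2 - 1/4) ^ 2)).
  { apply Rdiv_le_0_compat. nra. apply Rmult_lt_0_compat. apply pow_lt; lra.
    apply pow_lt; nra. }
  lra.
Qed.

Lemma S3_bound x N : 1 <= x -> sumn (fun k => 1 / (x + INR k) ^ 3) N <= 2 / x ^ 2.
Proof.
  intros Hx.
  set (f := fun k => 1 / (2 * (x + INR k - 1/2) ^ 2)).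
  apply Rle_trans with (sumn (fun k => f k - f (S k)) N).
  - apply sumn_le. intros k _. unfold f. rewrite S_INR.
    replace (x + (INR k + 1) - 1/2) with ((x + INR k) + 1 - 1/2) by ring.
    apply S3_term. generalize (pos_INR k); lra.
  - rewrite sumn_tele. unfold f. simpl INR. rewrite Rplus_0_r.
    assert (0 <= 1 / (2 * (x + INR N - 1/2) ^ 2)).
    { left. apply Rdiv_lt_0_compat. lra. apply Rmult_lt_0_compat. lra.
      apply pow_lt. generalize (pos_INR N); lra. }
    assert (1 / (2 * (x - 1/2) ^ 2) <= 2 / x ^ 2).
    { assert (E : 2 / x ^ 2 - 1 / (2 * (x - 1/2) ^ 2) = (4 * (x - 1/2) ^ 2 - x ^ 2) / (2 * x ^ 2 * (x - 1/2) ^ 2))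
        by (field; split; lra).
      assert (0 <= (4 * (x - 1/2) ^ 2 - x ^ 2) / (2 * x ^ 2 * (x - 1/2) ^ 2)).
      { apply Rdiv_le_0_compat. nra. apply Rmult_lt_0_compat. apply Rmult_lt_0_compat. lra.
        apply pow_lt; lra. apply pow_lt; lra. }
      lra. }
    lra.
Qed.

Lemma S2_term y : 1 <= y ->
  Rabs (1 / y ^ 2 - (1 / (y - 1/2) - 1 / (y + 1 - 1/2))) <= 1 / (3 * y ^ 3).
Proof.
  intros Hy.
  assert (E : (1 / (y - 1/2) - 1 / (y + 1 - 1/2)) - 1 / y ^ 2 = 1 / (4 * y ^ 2 * (y ^ 2 - 1/4))).
  { field. repeat split; nra. }
  assert (P1 : 0 <= 1 / (4 * y ^ 2 * (y ^ 2 - 1/4))).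
  { left; apply Rdiv_lt_0_compat. lra. apply Rmult_lt_0_compat. nra. nra. }
  assert (P2 : 1 / (3 * y ^ 3) - 1 / (4 * y ^ 2 * (y ^ 2 - 1/4)) = (4 * y ^ 2 - 1 - 3 * y) / (12 * y ^ 3 * (y ^ 2 - 1/4))).
  { field. repeat split; nra. }
  assert (0 <= (4 * y ^ 2 - 1 - 3 * y) / (12 * y ^ 3 * (y ^ 2 - 1/4))).
  { apply Rdiv_le_0_compat. nra. apply Rmult_lt_0_compat. apply Rmult_lt_0_compat. lra.
    apply pow_lt; lra. nra. }
  rewrite Rabs_minus_sym. rewrite E. rewrite Rabs_right; lra.
Qed.

Lemma S2_bound x N : 1 <= x ->
  Rabs (sumn (fun k => 1 / (x + INR k) ^ 2) N - 1 / x) <= 5 / (3 * x ^ 2) + 1 / (x + INR N - 1/2).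
Proof.
  intros Hx.
  set (f := fun k => 1 / (x + INR k - 1/2)).
  assert (H1 : Rabs (sumn (fun k => 1 / (x + INR k) ^ 2) N - sumn (fun k => f k - f (S k)) N)
               <= sumn (fun k => / 3 * (1 / (x + INR k) ^ 3)) N).
  { apply sumn_abs_le. intros k _. unfold f. rewrite S_INR.
    replace (x + (INR k + 1) - 1/2) with ((x + INR k) + 1 - 1/2) by ring.
    replace (/ 3 * (1 / (x + INR k) ^ 3)) with (1 / (3 * (x + INR k) ^ 3)).
    apply S2_term. generalize (pos_INR k); lra.
    field. generalize (pos_INR k); intro; lra. }
  rewrite sumn_scal in H1. assert (H3 := S3_bound x N Hx).
  rewrite sumn_tele in H1. unfold f in H1. simpl INR in H1. rewrite Rplus_0_r in H1.
  assert (HN : 0 < 1 / (x + INR N - 1/2)).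
  { apply Rdiv_lt_0_compat. lra. generalize (pos_INR N); lra. }
  assert (Hd : 0 <= 1 / (x - 1/2) - 1 / x <= 1 / x ^ 2).
  { assert (E : 1 / (x - 1/2) - 1 / x = 1 / (2 * x * (x - 1/2))) by (field; split; lra).
    rewrite E. split. left; apply Rdiv_lt_0_compat; nra.
    assert (E2 : 1 / x ^ 2 - 1 / (2 * x * (x - 1/2)) = (x - 1) / (2 * x ^ 2 * (x - 1/2))) by (field; split; lra).
    assert (0 <= (x - 1) / (2 * x ^ 2 * (x - 1/2))).
    { apply Rdiv_le_0_compat. lra. apply Rmult_lt_0_compat. nra. lra. }
    lra. }
  assert (0 < x ^ 2) by (apply pow_lt; lra).
  assert (E3 : 5 / (3 * x ^ 2) = 1 / x ^ 2 + / 3 * (2 / x ^ 2)) by (field; lra).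
  rewrite E3.
  assert (/ 3 * sumn (fun k => 1 / (x + INR k) ^ 3) N <= / 3 * (2 / x ^ 2)) by lra.
  revert H1. unfold Rabs; do 2 destruct Rcase_abs; intros; lra.
Qed.

Lemma nat_big r : exists N : nat, r < INR N.
Proof.
  destruct (archimed r) as [H1 _].
  destruct (Z.lt_ge_cases (up r) 0) as [Hn|Hp].
  - exists O. simpl. apply IZR_lt in Hn. lra.
  - exists (Z.to_nat (up r)). rewrite INR_IZR_INZ. rewrite Z2Nat.id by lia. lra.
Qed.

Lemma div_small a b eps : 0 <= a -> 0 < eps -> 2 * a / eps + 1 <= b -> a / b <= eps / 2.
Proof.
  intros Ha He Hb.
  assert (0 <= 2 * a / eps) by (apply Rdiv_le_0_compat; lra).
  assert (Hb0 : 0 < b) by lra.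
  apply Rmult_le_reg_r with b. lra. unfold Rdiv at 1. rewrite Rmult_assoc, Rinv_l, Rmult_1_r by lra.
  assert (eps * (2 * a / eps + 1) <= eps * b) by (apply Rmult_le_compat_l; lra).
  replace (eps * (2 * a / eps + 1)) with (2 * a + eps) in H0 by (field; lra). lra.
Qed.

Lemma D_expand x t B : 1 <= x -> 0 <= B -> Rabs t <= B -> Rabs t <= x / 2 ->
  Rabs (L (x + t) - L x - t * ln x - (t ^ 2 - t) / (2 * x))
    <= (B + 1 + 4 * (1 + B ^ 2)) * Rabs t / x ^ 2.
Proof.
  intros Hx HB HtB Htx.
  assert (Hxt : 0 < x + t) by (unfold Rabs in Htx; destruct Rcase_abs in Htx; lra).
  assert (Hta := Rabs_pos t).
  assert (Hx2 : 0 < x ^ 2) by (apply pow_lt; lra).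
  apply le_of_small. intros eps Heps.
  set (M := 2 * (B + 1) ^ 2 / eps + 2 * (B + 1) / eps + 1).
  assert (HM1 : 0 <= 2 * (B + 1) ^ 2 / eps) by (apply Rdiv_le_0_compat; nra).
  assert (HM2 : 0 <= 2 * (B + 1) / eps) by (apply Rdiv_le_0_compat; nra).
  destruct (nat_big (B + 2 + M)) as [N HN].
  rewrite (shift_identity x t N) by lra.
  set (y := x + INR N).
  assert (Hy : B + 2 + M < y) by (unfold y; lra).
  assert (HM : 1 <= M) by (unfold M; lra).
  assert (Hbr := L_bracket y t ltac:(lra)).
  assert (Hbr2 : Rabs t * (Rabs t + 1) / (y - Rabs t - 1) <= eps / 2).
  { apply Rle_trans with ((B + 1) ^ 2 / (y - Rabs t - 1)).
    unfold Rdiv. apply Rmult_le_compat_r. left; apply Rinv_0_lt_compat; lra. nra.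
    apply div_small. nra. auto. unfold M in Hy. lra. }
  set (S2 := sumn (fun k => 1 / (x + INR k) ^ 2) N).
  set (S3 := sumn (fun k => 1 / (x + INR k) ^ 3) N).
  assert (HS3 : S3 <= 2 / x ^ 2) by apply S3_bound, Hx.
  assert (HS2 : Rabs (S2 - 1 / x) <= 5 / (3 * x ^ 2) + 1 / (x + INR N - 1/2)) by apply S2_bound, Hx.
  assert (Hg : Rabs (sumn (gterm x t) N - sumn (fun k => (t ^ 2 - t) / 2 * (1 / (x + INR k) ^ 2)) N)
               <= sumn (fun k => 2 * (1 + B ^ 2) * Rabs t * (1 / (x + INR k) ^ 3)) N).
  { apply sumn_abs_le. intros k _.
    replace ((t ^ 2 - t) / 2 * (1 / (x + INR k) ^ 2)) with ((t ^ 2 - t) / (2 * (x + INR k) ^ 2)).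
    replace (2 * (1 + B ^ 2) * Rabs t * (1 / (x + INR k) ^ 3)) with (2 * (1 + B ^ 2) * Rabs t / (x + INR k) ^ 3).
    apply gterm_bound; auto.
    field. generalize (pos_INR k); lra.
    field. generalize (pos_INR k); lra. }
  rewrite !sumn_scal in Hg. fold S2 S3 in Hg.
  assert (HtB2 : Rabs (t ^ 2 - t) <= (B + 1) * Rabs t).
  { replace (t ^ 2 - t) with (t * (t - 1)) by ring. rewrite Rabs_mult.
    rewrite Rmult_comm. apply Rmult_le_compat_r. auto.
    eapply Rle_trans. apply Rabs_sub_le. rewrite Rabs_R1. lra. }
  assert (Hq : Rabs ((t ^ 2 - t) / 2 * (S2 - 1 / x))
               <= (B + 1) * Rabs t / 2 * (5 / (3 * x ^ 2) + 1 / (x + INR N - 1/2))).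
  { rewrite Rabs_mult. unfold Rdiv at 1. rewrite Rabs_mult, (Rabs_right (/2)) by lra.
    apply Rmult_le_compat. apply Rmult_le_pos; [apply Rabs_pos|lra]. apply Rabs_pos.
    apply Rmult_le_compat_r; lra. auto. }
  assert (Hlast : (B + 1) * Rabs t / 2 * (1 / (x + INR N - 1/2)) <= eps / 2).
  { apply Rle_trans with ((B + 1) * B / 2 * (1 / (x + INR N - 1/2))).
    apply Rmult_le_compat_r. left; apply Rdiv_lt_0_compat; lra.
    apply Rmult_le_compat_r. lra. apply Rmult_le_compat_l; lra.
    replace ((B + 1) * B / 2 * (1 / (x + INR N - 1 / 2))) with ((B + 1) * B / 2 / (x + INR N - 1 / 2))
      by (field; lra).
    apply div_small. nra. auto. unfold M in Hy. fold y.
    assert (2 * ((B + 1) * B / 2) / eps <= 2 * (B + 1) ^ 2 / eps).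
    { unfold Rdiv. apply Rmult_le_compat_r. left; apply Rinv_0_lt_compat; lra. nra. }
    lra. }
  assert (Hmain : (B + 1) * Rabs t / 2 * (5 / (3 * x ^ 2)) + 2 * (1 + B ^ 2) * Rabs t * (2 / x ^ 2)
                  <= (B + 1 + 4 * (1 + B ^ 2)) * Rabs t / x ^ 2).
  { assert (E : (B + 1 + 4 * (1 + B ^ 2)) * Rabs t / x ^ 2 -
                ((B + 1) * Rabs t / 2 * (5 / (3 * x ^ 2)) + 2 * (1 + B ^ 2) * Rabs t * (2 / x ^ 2))
                = (B + 1) * Rabs t / (6 * x ^ 2)) by (field; lra).
    assert (0 <= (B + 1) * Rabs t / (6 * x ^ 2)) by (apply Rdiv_le_0_compat; nra).
    lra. }
  assert (HS3' : 2 * (1 + B ^ 2) * Rabs t * S3 <= 2 * (1 + B ^ 2) * Rabs t * (2 / x ^ 2)).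
  { apply Rmult_le_compat_l. nra. auto. }
  replace (L (y + t) - L y - t * ln y + sumn (gterm x t) N -
           (t ^ 2 - t) / (2 * x))
    with ((L (y + t) - L y - t * ln y) +
          (sumn (gterm x t) N - (t ^ 2 - t) / 2 * S2) + (t ^ 2 - t) / 2 * (S2 - 1 / x))
    by (field; lra).
  eapply Rle_trans. apply Rabs_triang. eapply Rle_trans. apply Rplus_le_compat_r. apply Rabs_triang.
  assert (Edist : (B + 1) * Rabs t / 2 * (5 / (3 * x ^ 2) + 1 / (x + INR N - 1/2)) = (B + 1) * Rabs t / 2 * (5 / (3 * x ^ 2)) + (B + 1) * Rabs t / 2 * (1 / (x + INR N - 1/2))) by ring.
  lra.
Qed.

Definition Fm (t s m : R) : R :=
  (t - s) * (m * ln m - m - m * ln 2 - ln m / 2) + (t ^ 2 - s ^ 2) * ln m.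

Definition KB (B : R) : R := 4 * (B + 1 + 4 * (1 + B ^ 2)) + 3 + 4 * B.

Lemma term_bound m t s B : 2 <= m -> 0 <= B -> Rabs t <= B -> Rabs s <= B ->
  Rabs t <= m / 4 -> Rabs s <= m / 4 ->
  Rabs (L (m / 2 + t) - L (m / 2 + s) - (Fm t s m - Fm t s (m - 1)))
    <= KB B * (Rabs t + Rabs s) / m ^ 2.
Proof.
  intros Hm HB Ht Hs Htm Hsm.
  set (x := m / 2).
  assert (Hx : 1 <= x) by (unfold x; lra).
  assert (Et := D_expand x t B Hx HB Ht ltac:(unfold x; lra)).
  assert (Es := D_expand x s B Hx HB Hs ltac:(unfold x; lra)).
  set (et := L (x + t) - L x - t * ln x - (t ^ 2 - t) / (2 * x)) in *.
  set (es := L (x + s) - L x - s * ln x - (s ^ 2 - s) / (2 * x)) in *.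
  set (H := ln (1 + - (1 / m)) - - (1 / m) + (- (1 / m)) ^ 2 / 2).
  assert (HH : Rabs H <= 2 / m ^ 3).
  { assert (Ht1 := ln_taylor (- (1 / m))).
    assert (0 < 1 / m <= 1 / 2).
    { split. apply Rdiv_lt_0_compat; lra. apply Rmult_le_reg_r with m. lra. field_simplify; lra. }
    specialize (Ht1 ltac:(lra)). fold H in Ht1.
    rewrite Rabs_Ropp, (Rabs_right (1 / m)) in Ht1 by lra.
    replace (2 / m ^ 3) with (2 * (1 / m) ^ 3) by (field; lra). exact Ht1. }
  assert (Hlm1 : ln (m - 1) = ln m + ln (1 + - (1 / m))).
  { replace (- (1 / m)) with ((-1) / m) by (field; lra).
    rewrite <- ln_ratio by lra. replace (m + -1) with (m - 1) by ring. ring. }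
  assert (Hlx : ln x = ln m - ln 2).
  { unfold x, Rdiv. rewrite ln_mult, ln_Rinv by lra. ring. }
  assert (Hl1 : ln (1 + - (1 / m)) = H - 1 / m - 1 / (2 * m ^ 2)).
  { unfold H. field. lra. }
  assert (Hid : L (x + t) - L (x + s) - (Fm t s m - Fm t s (m - 1)) =
     et - es + (t - s) * (3 / (4 * m ^ 2) + (m - 3 / 2) * H) + (t ^ 2 - s ^ 2) * (- 1 / (2 * m ^ 2) + H)).
  { unfold et, es, Fm. rewrite Hlm1, Hl1, Hlx. unfold x. field. lra. }
  rewrite Hid.
  assert (Hm2 : 0 < m ^ 2) by (apply pow_lt; lra).
  assert (HA : Rabs (3 / (4 * m ^ 2) + (m - 3 / 2) * H) <= 3 / m ^ 2).
  { eapply Rle_trans. apply Rabs_triang. rewrite Rabs_mult.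
    rewrite (Rabs_right (3 / (4 * m ^ 2))) by (left; apply Rdiv_lt_0_compat; lra).
    rewrite (Rabs_right (m - 3/2)) by lra.
    assert ((m - 3 / 2) * Rabs H <= m * (2 / m ^ 3)).
    { apply Rmult_le_compat; try lra. apply Rabs_pos. }
    replace (m * (2 / m ^ 3)) with (2 / m ^ 2) in H0 by (field; lra).
    assert (E : 3 / m ^ 2 = 3 / (4 * m ^ 2) + 2 / m ^ 2 + 1 / (4 * m ^ 2)) by (field; lra).
    assert (0 < 1 / (4 * m ^ 2)) by (apply Rdiv_lt_0_compat; lra). lra. }
  assert (HBc : Rabs (- 1 / (2 * m ^ 2) + H) <= 2 / m ^ 2).
  { eapply Rle_trans. apply Rabs_triang.
    rewrite Rabs_left by (apply Ropp_lt_gt_0_contravar in Hm2; unfold Rdiv;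
      apply Rmult_neg_pos; [lra|apply Rinv_0_lt_compat; lra]).
    assert (2 / m ^ 3 <= 1 / m ^ 2).
    { apply Rmult_le_reg_r with (m ^ 3). apply pow_lt; lra.
      field_simplify; try lra. }
    assert (E : - (-1 / (2 * m ^ 2)) = 1 / (2 * m ^ 2)) by (field; lra).
    assert (E2 : 2 / m ^ 2 = 1 / (2 * m ^ 2) + 1 / m ^ 2 + 1 / (2 * m ^ 2)) by (field; lra).
    assert (0 < 1 / (2 * m ^ 2)) by (apply Rdiv_lt_0_compat; lra). lra. }
  assert (Hts : Rabs (t - s) <= Rabs t + Rabs s) by apply Rabs_sub_le.
  assert (Hts2 : Rabs (t ^ 2 - s ^ 2) <= 2 * B * (Rabs t + Rabs s)).
  { replace (t ^ 2 - s ^ 2) with ((t - s) * (t + s)) by ring. rewrite Rabs_mult.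
    assert (Rabs (t + s) <= 2 * B) by (eapply Rle_trans; [apply Rabs_triang|lra]).
    rewrite Rmult_comm. apply Rmult_le_compat; auto using Rabs_pos. }
  assert (T1 : Rabs ((t - s) * (3 / (4 * m ^ 2) + (m - 3 / 2) * H)) <= (Rabs t + Rabs s) * (3 / m ^ 2)).
  { rewrite Rabs_mult. apply Rmult_le_compat; auto using Rabs_pos. }
  assert (T2 : Rabs ((t ^ 2 - s ^ 2) * (- 1 / (2 * m ^ 2) + H)) <= 2 * B * (Rabs t + Rabs s) * (2 / m ^ 2)).
  { rewrite Rabs_mult. apply Rmult_le_compat; auto using Rabs_pos. }
  assert (Et' : (B + 1 + 4 * (1 + B ^ 2)) * Rabs t / x ^ 2 = 4 * (B + 1 + 4 * (1 + B ^ 2)) * Rabs t / m ^ 2)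
    by (unfold x; field; lra).
  assert (Es' : (B + 1 + 4 * (1 + B ^ 2)) * Rabs s / x ^ 2 = 4 * (B + 1 + 4 * (1 + B ^ 2)) * Rabs s / m ^ 2)
    by (unfold x; field; lra).
  rewrite Et' in Et. rewrite Es' in Es.
  assert (EK : KB B * (Rabs t + Rabs s) / m ^ 2 =
     4 * (B + 1 + 4 * (1 + B ^ 2)) * Rabs t / m ^ 2 + 4 * (B + 1 + 4 * (1 + B ^ 2)) * Rabs s / m ^ 2
     + (Rabs t + Rabs s) * (3 / m ^ 2) + 2 * B * (Rabs t + Rabs s) * (2 / m ^ 2))
    by (unfold KB; field; lra).
  rewrite EK.
  eapply Rle_trans. apply Rabs_triang. eapply Rle_trans. apply Rplus_le_compat_r. apply Rabs_triang.
  eapply Rle_trans. apply Rplus_le_compat_r. apply Rplus_le_compat_r. apply Rabs_sub_le.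
  lra.
Qed.

Lemma KB_pos B : 0 <= B -> 0 <= KB B.
Proof. intros; unfold KB. nra. Qed.

Lemma prod_bound (n p : nat) (t s B : R) (k : nat) : (p < n)%nat -> 0 <= B ->
  Rabs t <= B -> Rabs s <= B ->
  Rabs t <= (INR n - INR p + 1) / 4 -> Rabs s <= (INR n - INR p + 1) / 4 ->
  (k <= p)%nat ->
  0 < prod_Gamma k (INR n / 2 + t) /\ 0 < prod_Gamma k (INR n / 2 + s) /\
  Rabs (ln (prod_Gamma k (INR n / 2 + t)) - ln (prod_Gamma k (INR n / 2 + s))
        - (Fm t s (INR n) - Fm t s (INR n - INR k)))
    <= KB B * (Rabs t + Rabs s) * (1 / (INR n - INR k) - 1 / INR n).
Proof.
  intros Hpn HB Ht Hs Ht' Hs' Hk.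
  assert (Hnp : INR p + 1 <= INR n).
  { rewrite <- S_INR. apply le_INR. lia. }
  assert (Hp0 := pos_INR p).
  assert (HKB := KB_pos B HB).
  assert (Hts : 0 <= Rabs t + Rabs s) by (generalize (Rabs_pos t) (Rabs_pos s); lra).
  induction k as [|k IH].
  - simpl prod_Gamma. rewrite ln_1. simpl INR. rewrite Rminus_0_r.
    rewrite (Rminus_0_r (INR n)). replace (0 - (Fm t s (INR n) - Fm t s (INR n))) with 0 by ring.
    replace (1 / INR n - 1 / INR n) with 0 by ring. rewrite Rabs_R0, Rmult_0_r. lra.

  - destruct (IH ltac:(lia)) as [P1 [P2 E]].
    assert (Hkp : INR k + 1 <= INR p) by (rewrite <- S_INR; apply le_INR; lia).
    set (m := INR n - INR k).
    assert (Hm : 2 <= m) by (unfold m; lra).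
    assert (Htm : Rabs t <= m / 4) by (unfold m; lra).
    assert (Hsm : Rabs s <= m / 4) by (unfold m; lra).
    assert (Ez : forall u, INR n / 2 + u - INR k / 2 = m / 2 + u) by (intros; unfold m; field).
    assert (G1 : 0 < Gamma (m / 2 + t)).
    { apply Gamma_pos. unfold Rabs in Htm; destruct Rcase_abs in Htm; lra. }
    assert (G2 : 0 < Gamma (m / 2 + s)).
    { apply Gamma_pos. unfold Rabs in Hsm; destruct Rcase_abs in Hsm; lra. }
    simpl prod_Gamma. rewrite !Ez.
    split; [apply Rmult_lt_0_compat; auto|].
    split; [apply Rmult_lt_0_compat; auto|].
    rewrite !ln_mult by auto.
    assert (T := term_bound m t s B Hm HB Ht Hs Htm Hsm). unfold L in T.
    rewrite S_INR. replace (INR n - (INR k + 1)) with (m - 1) by (unfold m; ring).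
    fold m in E.
    assert (Hq : KB B * (Rabs t + Rabs s) / m ^ 2 <= KB B * (Rabs t + Rabs s) * (1 / (m - 1) - 1 / m)).
    { unfold Rdiv at 1. apply Rmult_le_compat_l. apply Rmult_le_pos; lra.
      assert (E1 : 1 / (m - 1) - 1 / m = / (m * (m - 1))) by (field; lra).
      rewrite E1. apply Rinv_le_contravar. nra. simpl. nra. }
    assert (Ed : KB B * (Rabs t + Rabs s) * (1 / (m - 1) - 1 / INR n) =
       KB B * (Rabs t + Rabs s) * (1 / m - 1 / INR n) + KB B * (Rabs t + Rabs s) * (1 / (m - 1) - 1 / m))
       by ring.
    rewrite Ed.
    replace (ln (prod_Gamma k (INR n / 2 + t)) + ln (Gamma (m / 2 + t)) -
      (ln (prod_Gamma k (INR n / 2 + s)) + ln (Gamma (m / 2 + s))) -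
      (Fm t s (INR n) - Fm t s (m - 1)))
    with ((ln (prod_Gamma k (INR n / 2 + t)) - ln (prod_Gamma k (INR n / 2 + s)) -
           (Fm t s (INR n) - Fm t s m)) +
          (ln (Gamma (m / 2 + t)) - ln (Gamma (m / 2 + s)) - (Fm t s m - Fm t s (m - 1))))
      by ring.
    eapply Rle_trans. apply Rabs_triang. lra.
Qed.

Lemma per_n (n p : nat) (t s B : R) : (p < n)%nat -> 0 <= B ->
  Rabs t <= B -> Rabs s <= B ->
  Rabs t <= (INR n - INR p + 1) / 4 -> Rabs s <= (INR n - INR p + 1) / 4 ->
  Rabs (ln (mGamma p (INR n / 2 + t) / mGamma p (INR n / 2 + s))
       - ( INR p * (t - s) * (ln (INR n) - 1 - ln 2)
           + (sqrt (- ln (1 - INR p / INR n))) ^ 2 *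
               ((t ^ 2 - s ^ 2)
                - (INR p - INR n + 1 / 2) * (t - s)) ))
   <= KB B * (Rabs t + Rabs s) / (INR n - INR p).
Proof.
  intros Hpn HB Ht Hs Ht' Hs'.
  destruct (prod_bound n p t s B p Hpn HB Ht Hs Ht' Hs' (Nat.le_refl _)) as [P1 [P2 E]].
  assert (Hnp : INR p + 1 <= INR n) by (rewrite <- S_INR; apply le_INR; lia).
  assert (Hp0 := pos_INR p).
  assert (HKB := KB_pos B HB).
  assert (Hts : 0 <= Rabs t + Rabs s) by (generalize (Rabs_pos t) (Rabs_pos s); lra).
  assert (HR : 0 < Rpower PI (INR p * (INR p - 1) / 4)) by (unfold Rpower; apply exp_pos).
  assert (Hm : ln (mGamma p (INR n / 2 + t) / mGamma p (INR n / 2 + s)) =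
               ln (prod_Gamma p (INR n / 2 + t)) - ln (prod_Gamma p (INR n / 2 + s))).
  { unfold mGamma. replace (Rpower PI (INR p * (INR p - 1) / 4) * prod_Gamma p (INR n / 2 + t) /
      (Rpower PI (INR p * (INR p - 1) / 4) * prod_Gamma p (INR n / 2 + s)))
      with (prod_Gamma p (INR n / 2 + t) / prod_Gamma p (INR n / 2 + s)) by (field; lra).
    unfold Rdiv. rewrite ln_mult by (try apply Rinv_0_lt_compat; auto). rewrite ln_Rinv by auto. ring. }
  assert (Hq : 1 - INR p / INR n = (INR n - INR p) / INR n) by (field; lra).
  assert (Hl : - ln (1 - INR p / INR n) = ln (INR n) - ln (INR n - INR p)).
  { rewrite Hq. unfold Rdiv. rewrite ln_mult, ln_Rinv by (try apply Rinv_0_lt_compat; lra). ring. }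
  assert (Hl0 : 0 <= - ln (1 - INR p / INR n)).
  { rewrite Hl. assert (ln (INR n - INR p) <= ln (INR n)) by (apply ln_le; lra). lra. }
  assert (Hs2 : sqrt (- ln (1 - INR p / INR n)) ^ 2 = ln (INR n) - ln (INR n - INR p)).
  { simpl. rewrite Rmult_1_r, sqrt_sqrt by auto. exact Hl. }
  rewrite Hm, Hs2.
  replace (INR p * (t - s) * (ln (INR n) - 1 - ln 2) +
     (ln (INR n) - ln (INR n - INR p)) * (t ^ 2 - s ^ 2 - (INR p - INR n + 1 / 2) * (t - s)))
    with (Fm t s (INR n) - Fm t s (INR n - INR p)) by (unfold Fm; field).
  eapply Rle_trans. exact E.
  replace (KB B * (Rabs t + Rabs s) / (INR n - INR p)) with
    (KB B * (Rabs t + Rabs s) * (1 / (INR n - INR p))) by (field; lra).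
  apply Rmult_le_compat_l. apply Rmult_le_pos; lra.
  assert (0 < 1 / INR n) by (apply Rdiv_lt_0_compat; lra). lra.
Qed.

Lemma rq_big (a b y M : R) : 1 <= a - b -> 0 <= b -> 0 < y -> y / 2 <= b / a -> 0 < M ->
  2 * exp (M ^ 2) * M ^ 2 / y + 1 <= a ->
  M <= sqrt (- ln (1 - b / a)) * (a - b).
Proof.
  intros Hq Hb Hy Hv HM Ha.
  set (K := exp (M ^ 2)) in *.
  assert (HK : 0 < K) by apply exp_pos.
  assert (Ha0 : 0 < a) by lra.
  set (q := a - b) in *.
  assert (Hr : - ln (1 - b / a) = ln a - ln q).
  { replace (1 - b / a) with (q / a) by (unfold q; field; lra).
    unfold Rdiv. rewrite ln_mult, ln_Rinv by (try apply Rinv_0_lt_compat; lra). ring. }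
  assert (Hrv : b / a <= - ln (1 - b / a)).
  { assert (0 < 1 - b / a) by (replace (1 - b / a) with (q / a) by (unfold q; field; lra);
                                apply Rdiv_lt_0_compat; lra).
    generalize (ln_le_sub1 (1 - b / a) H). lra. }
  set (R2 := - ln (1 - b / a)) in *.
  assert (HR2 : 0 <= R2) by (assert (0 <= b / a) by (apply Rdiv_le_0_compat; lra); lra).
  assert (Hmain : M ^ 2 <= R2 * q).
  { destruct (Rle_dec q (a / K)) as [Hs|Hl].
    - assert (ln K <= ln a - ln q).
      { assert (K <= a / q).
        { apply Rmult_le_reg_r with (q / K). apply Rdiv_lt_0_compat; lra.
          replace (K * (q / K)) with q by (field; lra).
          replace (a / q * (q / K)) with (a / K) by (field; lra). lra. }
        assert (ln K <= ln (a / q)) by (apply ln_le; lra).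
        unfold Rdiv in H0. rewrite ln_mult, ln_Rinv in H0 by (try apply Rinv_0_lt_compat; lra).
        lra. }
      unfold K in H. rewrite ln_exp in H. nra.
    - assert (a / K < q) by lra.
      assert (y / 2 * (a / K) <= R2 * q).
      { apply Rmult_le_compat; try lra. apply Rdiv_le_0_compat; lra. }
      assert (M ^ 2 <= y / 2 * (a / K)).
      { assert (2 * K * M ^ 2 / y <= a) by lra.
        apply Rmult_le_reg_r with (2 * K / y). apply Rdiv_lt_0_compat; lra.
        replace (y / 2 * (a / K) * (2 * K / y)) with a by (field; lra).
        replace (M ^ 2 * (2 * K / y)) with (2 * K * M ^ 2 / y) by (field; lra). lra. }
      lra. }
  assert (Hsq : (sqrt R2 * q) ^ 2 = R2 * q ^ 2).
  { rewrite Rpow_mult_distr. simpl. rewrite !Rmult_1_r, sqrt_sqrt by auto. ring. }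
  assert (R2 * q <= R2 * q ^ 2) by (apply Rmult_le_compat_l; auto; simpl; nra).
  assert (0 <= sqrt R2 * q) by (apply Rmult_le_pos; [apply sqrt_pos|lra]).
  nra.
Qed.

Theorem lemma4 (p : nat -> nat) (y : R) (s t : nat -> R) :
  (exists N : nat, forall n : nat, (N <= n)%nat -> (p n < n)%nat) ->
  0 < y <= 1 ->
  is_lim_seq (fun n => INR (p n) / INR n) y ->
  (exists C : R, exists N : nat, forall n : nat, (N <= n)%nat ->
      Rabs (s n) <= C / r_seq p n) ->
  (exists C : R, exists N : nat, forall n : nat, (N <= n)%nat ->
      Rabs (t n) <= C / r_seq p n) ->
  is_lim_seq
    (fun n =>
       ln (mGamma (p n) (INR n / 2 + t n) / mGamma (p n) (INR n / 2 + s n))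
       - ( INR (p n) * (t n - s n) * (ln (INR n) - 1 - ln 2)
           + (r_seq p n) ^ 2 *
               ((t n ^ 2 - s n ^ 2)
                - (INR (p n) - INR n + 1 / 2) * (t n - s n)) ))
    0.
Proof.
  intros [N1 HN1] [Hy0 Hy1] Hlim [C2 [N2 HC2]] [C1 [N3 HC1]].
  apply is_lim_seq_spec. intros eps.
  apply is_lim_seq_spec in Hlim.
  destruct (Hlim (mkposreal (y / 2) ltac:(lra))) as [N4 HN4]. simpl in HN4.
  set (C := Rabs C1 + Rabs C2 + 1).
  assert (HC : 0 < C) by (unfold C; generalize (Rabs_pos C1) (Rabs_pos C2); lra).
  set (r0 := sqrt (y / 2)).
  assert (Hr0 : 0 < r0) by (apply sqrt_lt_R0; lra).
  set (B := C / r0).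
  assert (HB : 0 <= B) by (left; apply Rdiv_lt_0_compat; lra).
  assert (HKB := KB_pos B HB).
  set (M := 4 * C + 2 * (KB B * C) / eps + 1).
  assert (HKe : 0 <= 2 * (KB B * C) / eps) by (apply Rdiv_le_0_compat; [nra|apply cond_pos]).
  assert (HM : 0 < M) by (unfold M; lra).
  destruct (nat_big (2 * exp (M ^ 2) * M ^ 2 / y + 1)) as [N5 HN5].
  exists (N1 + N2 + N3 + N4 + N5)%nat. intros n Hn.
  assert (Hpn := HN1 n ltac:(lia)).
  assert (Hv := HN4 n ltac:(lia)).
  assert (Hsn := HC2 n ltac:(lia)).
  assert (Htn := HC1 n ltac:(lia)).
  assert (Hnp : INR (p n) + 1 <= INR n) by (rewrite <- S_INR; apply le_INR; lia).
  assert (Hp0 := pos_INR (p n)).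
  assert (Hnbig : 2 * exp (M ^ 2) * M ^ 2 / y + 1 <= INR n).
  { apply Rle_trans with (INR N5). lra. apply le_INR. lia. }
  assert (Hvy : y / 2 <= INR (p n) / INR n).
  { unfold Rabs in Hv; destruct Rcase_abs in Hv; lra. }
  assert (Hrq := rq_big (INR n) (INR (p n)) y M ltac:(lra) Hp0 Hy0 Hvy HM Hnbig).
  fold (r_seq p n) in Hrq.
  set (r := r_seq p n) in *.
  assert (Hr2 : y / 2 <= r ^ 2).
  { unfold r, r_seq. simpl. rewrite Rmult_1_r, sqrt_sqrt.
    assert (0 < 1 - INR (p n) / INR n).
    { replace (1 - INR (p n) / INR n) with ((INR n - INR (p n)) / INR n) by (field; lra).
      apply Rdiv_lt_0_compat; lra. }
    generalize (ln_le_sub1 _ H). lra.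
    assert (0 < 1 - INR (p n) / INR n).
    { replace (1 - INR (p n) / INR n) with ((INR n - INR (p n)) / INR n) by (field; lra).
      apply Rdiv_lt_0_compat; lra. }
    assert (0 <= INR (p n) / INR n) by (apply Rdiv_le_0_compat; lra).
    generalize (ln_le_sub1 _ H). lra. }
  assert (Hrpos : 0 <= r) by (unfold r, r_seq; apply sqrt_pos).
  assert (Hrr0 : r0 <= r).
  { unfold r0. rewrite <- (sqrt_pow2 r Hrpos). apply sqrt_le_1_alt. lra. }
  assert (Hrp : 0 < r) by lra.
  assert (Hq1 : 1 <= INR n - INR (p n)) by lra.
  assert (Htr : Rabs (t n) <= C / r).
  { eapply Rle_trans. exact Htn. unfold Rdiv. apply Rmult_le_compat_r.
    left; apply Rinv_0_lt_compat; lra. unfold C. generalize (Rabs_pos C2) (Rle_abs C1). lra. }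
  assert (Hsr : Rabs (s n) <= C / r).
  { eapply Rle_trans. exact Hsn. unfold Rdiv. apply Rmult_le_compat_r.
    left; apply Rinv_0_lt_compat; lra. unfold C. generalize (Rabs_pos C1) (Rle_abs C2). lra. }
  assert (HCr : C / r <= B).
  { unfold B, Rdiv. apply Rmult_le_compat_l. lra. apply Rinv_le_contravar; lra. }
  assert (HCq : C / r <= (INR n - INR (p n) + 1) / 4).
  { apply Rmult_le_reg_r with (4 * r). lra.
    replace (C / r * (4 * r)) with (4 * C) by (field; lra).
    assert (4 * C <= r * (INR n - INR (p n))) by (unfold M in Hrq; lra).
    nra. }
  assert (Hper := per_n n (p n) (t n) (s n) B Hpn HB ltac:(lra) ltac:(lra) ltac:(lra) ltac:(lra)).
  rewrite Rminus_0_r.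
  eapply Rle_lt_trans. exact Hper.
  set (q := INR n - INR (p n)) in *.
  assert (Hts : Rabs (t n) + Rabs (s n) <= 2 * C / r) by (unfold Rdiv in *; lra).
  apply Rle_lt_trans with (KB B * (2 * C / r) / q).
  { unfold Rdiv. apply Rmult_le_compat_r. left; apply Rinv_0_lt_compat; lra.
    apply Rmult_le_compat_l; lra. }
  replace (KB B * (2 * C / r) / q) with (2 * (KB B * C) / (r * q)) by (field; lra).
  assert (Hrq' : M <= r * q) by exact Hrq.
  assert (Hrq0 : 0 < r * q) by lra.
  assert (He := cond_pos eps).
  apply Rmult_lt_reg_r with (r * q). auto.
  replace (2 * (KB B * C) / (r * q) * (r * q)) with (2 * (KB B * C)) by (field; lra).
  assert (eps * M <= eps * (r * q)) by (apply Rmult_le_compat_l; lra).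
  assert (2 * (KB B * C) < eps * M).
  { unfold M. replace (eps * (4 * C + 2 * (KB B * C) / eps + 1)) with
      (eps * (4 * C) + 2 * (KB B * C) + eps) by (field; lra). nra. }
  lra.
Qed.
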